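(* Let $n$ be a positive integer and let $\mathcal{D}$ be a set of positive divisors of $n/\mathrm{rad}(n)$ which is product-free as a set of integers (i.e. there are no $d_1,d_2,d_3\in\mathcal{D}$ with $d_1d_2=d_3$). Then the set $$ S_{\mathcal{D}} := \{ s\in \mathbb{Z}/n\mathbb{Z} : \gcd(s,n)\in \mathcal{D}\} $$ is a product-free subset of $\mathbb{Z}/n\mathbb{Z}$, and $$ |S_{\mathcal{D}}| = \varphi(n)\sum_{d\in\mathcal{D}}\frac1d . $$
   Context: $\mathrm{rad}(n)$ denotes the largest squarefree divisor of $n$ (the product of the distinct primes dividing $n$), and $\varphi$ is Euler's totient function. For $s\in\mathbb{Z}/n\mathbb{Z}$, $\gcd(s,n)$ means the gcd of $n$ with any integer representative of $s$ (well defined). A subset $S\subseteq \mathbb{Z}/n\mathbb{Z}$ is product-free if there are no $a,b,c\in S$ (not necessarily distinct) with $ab\equiv c\pmod n$. *)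

(* Defs.v *)
From HB Require Import structures.
From mathcomp Require Import all_boot all_order all_algebra.
Set Implicit Arguments. Unset Strict Implicit. Unset Printing Implicit Defensive.

Definition radical (n : nat) : nat := \prod_(p <- primes n) p.

(* Z/nZ is modelled as 'I_n (residues 0..n-1, n >= 1), with
   multiplication (a * b) mod n. *)
Definition product_free_mod (n : nat) (S : {set 'I_n}) : Prop :=
  forall a b c : 'I_n, a \in S -> b \in S -> c \in S -> (a * b) %% n <> c.

Definition product_free_nat (D : seq nat) : Prop :=
  forall d1 d2 d3, d1 \in D -> d2 \in D -> d3 \in D -> d1 * d2 <> d3.

Definition S_D (n : nat) (D : seq nat) : {set 'I_n} :=
  [set s : 'I_n | gcdn s n \in D].

(* Main.v *)
Require Import Defs.
From HB Require Import structures.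
From mathcomp Require Import all_boot all_order all_algebra.
From mathcomp Require Import zify.
Import GRing.Theory Num.Theory.

Lemma rad_dvd n : radical n %| n.
Proof.
case: (posnP n) => [->|n0]; first by rewrite dvdn0.
rewrite {2}(prod_prime_decomp n0) /radical /primes /unzip1 big_map big_seq [X in _ %| X]big_seq.
apply: (big_ind2 (fun x y => x %| y)) => //; first by move=> ? ? ? ? ? ?; apply: dvdn_mul.
case=> p e /mem_prime_decomp [_ e0 _] /=.
by rewrite -{1}(expn1 p) dvdn_exp2l.
Qed.

Lemma p_dvd_rad n p : p \in primes n -> p %| radical n.
Proof. by move=> pn; rewrite /radical (big_rem p) //= dvdn_mulr. Qed.

Lemma key n x g p : 0 < n -> g = gcdn x n -> g %| n %/ radical n ->
  prime p -> p %| n -> ~~ (p * g %| x).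
Proof.
move=> n0 eg gd pp pn; apply/negP => pgx.
have hg : g * radical n %| n by rewrite -{2}(divnK (rad_dvd n)) dvdn_mul.
have prad : p %| radical n by apply: p_dvd_rad; rewrite mem_primes pp n0.
have pgn : p * g %| n by apply: dvdn_trans hg; rewrite mulnC dvdn_mul.
have : p * g %| g by rewrite {2}eg dvdn_gcd pgx.
have g0 : 0 < g by rewrite eg gcdn_gt0 n0 orbT.
rewrite -{2}(mul1n g) dvdn_pmul2r // dvdn1 => /eqP p1.
by move: pp; rewrite p1.
Qed.

Lemma cofactor_coprime n x : 0 < n -> gcdn x n %| n %/ radical n ->
  coprime (x %/ gcdn x n) n.
Proof.
move=> n0 gd; set g := gcdn x n.
case: (boolP (coprime (x %/ g) n)) => // nc.
have g1 : 1 < gcdn (x %/ g) n.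
  by rewrite ltn_neqAle eq_sym nc gcdn_gt0 n0 orbT.
case: (pdivP g1) => p pp pd.
have := @key n x g p n0 (erefl g) gd pp (dvdn_trans pd (dvdn_gcdr _ _)).
have g0 : 0 < g by rewrite gcdn_gt0 n0 orbT.
rewrite -(divnK (dvdn_gcdl x n)) -/g dvdn_pmul2r //.
by rewrite (dvdn_trans pd (dvdn_gcdl _ _)).
Qed.

Lemma gcd_prod n a b : 0 < n -> gcdn a n %| n %/ radical n ->
  gcdn b n %| n %/ radical n ->
  gcdn (a * b) n = gcdn (gcdn a n * gcdn b n) n.
Proof.
move=> n0 ha hb.
have ca := @cofactor_coprime n a n0 ha; have cb := @cofactor_coprime n b n0 hb.
set g1 := gcdn a n; set g2 := gcdn b n.
have e1 : a = a %/ g1 * g1 by rewrite divnK // dvdn_gcdl.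
have e2 : b = b %/ g2 * g2 by rewrite divnK // dvdn_gcdl.
rewrite {1}e1 {1}e2 mulnACA [X in gcdn X _]mulnC.
have cX : coprime n (a %/ g1 * (b %/ g2)) by rewrite coprimeMr !(coprime_sym n) ca cb.
rewrite gcdnC (Gauss_gcdl _ cX) gcdnC //.
Qed.
Lemma gcd_prod_eq n d1 d2 : 0 < n -> 0 < d1 -> 0 < d2 -> d1 %| n -> d2 %| n ->
  gcdn (d1 * d2) n %| n %/ radical n -> gcdn (d1 * d2) n = d1 * d2.
Proof.
move=> n0 p1 p2 h1 h2 hd; set d3 := gcdn (d1 * d2) n.
have d3d : d3 %| d1 * d2 by apply: dvdn_gcdl.
have d30 : 0 < d3 by rewrite gcdn_gt0 n0 orbT.
have ee := divnK d3d; set e := (d1 * d2) %/ d3 in ee.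
case: (ltngtP e 1) => [e0|e1|e1].
- have ez : e = 0 by apply/eqP; rewrite -leqn0 -ltnS.
  by move: ee; rewrite ez mul0n => /esym/eqP; rewrite muln_eq0 eqn0Ngt p1 eqn0Ngt p2.
- case: (pdivP e1) => p pp pe.
  have pd : p %| d1 * d2 by rewrite -ee dvdn_mulr.
  have pn : p %| n by move: pd; rewrite Euclid_dvdM // => /orP [] ?; [apply: dvdn_trans h1| apply: dvdn_trans h2].
  have := @key n (d1*d2) d3 p n0 (erefl d3) hd pp pn.
  by rewrite -ee dvdn_pmul2r // pe.
- by rewrite -ee e1 mul1n.
Qed.

Lemma totient_mulp m p : 0 < m -> prime p -> p %| m -> totient (m * p) = totient m * p.
Proof.
move=> m0 pp pm.
case: (pfactor_coprime pp m0) => q cq em.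
have e0 : 0 < logn p m by rewrite logn_gt0 mem_primes pp m0 pm.
set e := logn p m in em e0.
rewrite em -mulnA -expnSr !totient_coprime; first last.
- by apply: coprimeXr; rewrite coprime_sym.
- by apply: coprimeXr; rewrite coprime_sym.
rewrite !totient_pfactor //= -mulnA; congr (_ * _).
by rewrite -mulnA -expnSr prednK.
Qed.

Lemma totient_mulk k : forall m, 0 < m -> 0 < k -> (forall p, prime p -> p %| k -> p %| m) ->
  totient (m * k) = totient m * k.
Proof.
elim: k {-2}k (leqnn k) => [|N IH] k kN m m0 k0 hk.
  by move: kN k0; rewrite leqn0 => /eqP ->.
case: (ltngtP k 1) => [k1|k1|->]; last by rewrite !muln1.
- by move: k1 k0; rewrite ltnS leqn0 => /eqP ->.
case: (pdivP k1) => p pp pk.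
have ek := divnK pk; set k' := k %/ p in ek.
have p0 := prime_gt0 pp.
have k'0 : 0 < k' by move: k0; rewrite -ek muln_gt0 => /andP[].
have pm : p %| m by apply: hk.
rewrite -ek [k' * p]mulnC mulnA (IH k') ?muln_gt0 ?m0 //.
- by rewrite totient_mulp // mulnA.
- rewrite -ltnS; apply: leq_trans kN; rewrite -ek -{1}(muln1 k') ltn_mul2l k'0 prime_gt1 //.
- move=> r rp rk'; apply: dvdn_mulr; apply: hk => //.
  by rewrite -ek dvdn_mulr.
Qed.

Lemma sum_block m d k : 0 < d ->
  \sum_(0 <= s < k * d) (gcdn s (m * d) == d) = \sum_(0 <= t < k) coprime m t.
Proof.
move=> d0; elim: k => [|k IH]; first by rewrite mul0n !big_geq.
rewrite big_nat_recr //= -IH mulSnr (big_cat_nat _ (leq_addr d (k * d))) //=; congr (_ + _).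
rewrite big_ltn; last by rewrite -{1}(addn0 (k * d)) ltn_add2l.
rewrite big_nat_cond big1 ?addn0.
  by rewrite -muln_gcdl -{2}(mul1n d) eqn_pmul2r // /coprime gcdnC.
move=> s /andP[/andP[hs1 hs2] _]; case: eqP => // hg.
have : d %| s by rewrite -hg dvdn_gcdl.
move=> /dvdnP [j ej]; subst s.
have h1 : k < j by rewrite -(ltn_pmul2r d0).
have h2 : j < k.+1 by rewrite -(ltn_pmul2r d0) mulSnr.
by move: h1 h2; rewrite ltnS => h1 h2; have := leq_ltn_trans h2 h1; rewrite ltnn.
Qed.

Lemma card_gcd n d : 0 < n -> 0 < d -> d %| n ->
  #|[set s : 'I_n | gcdn s n == d]| = totient (n %/ d).
Proof.
move=> n0 d0 dn.
rewrite -sum1_card big_mkcond /=.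
under eq_bigr do rewrite inE.
rewrite -(big_mkord xpredT (fun i => if gcdn i n == d then 1 else 0)).
set m := n %/ d.
have -> : n = m * d by rewrite divnK.
rewrite totient_count_coprime -(@sum_block m d m d0).
by apply: eq_bigr => i _; case: eqP.
Qed.

Theorem lemma2p3 (n : nat) (D : seq nat) :
  (0 < n)%N ->
  uniq D ->
  (forall d, d \in D -> (0 < d)%N /\ (d %| (n %/ radical n))%N) ->
  product_free_nat D ->
  product_free_mod (S_D n D) /\
  (#|S_D n D|%:R : rat)%R = ((totient n)%:R * \sum_(d <- D) (d%:R)^-1)%R.
Proof.
move=> n0 uD hD pf.
have dn : forall d, d \in D -> d %| n.
  move=> d /hD [_ h]; apply: dvdn_trans h _.
  by apply/dvdnP; exists (radical n); rewrite mulnC divnK // rad_dvd.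
split.
  move=> a b c; rewrite !inE => ha hb hc e.
  have [p1 h1] := hD _ ha; have [p2 h2] := hD _ hb; have [p3 h3] := hD _ hc.
  have eg : gcdn c n = gcdn (a * b) n by rewrite -e gcdn_modl.
  rewrite (@gcd_prod n a b n0 h1 h2) in eg.
  rewrite eg in h3.
  have := @gcd_prod_eq n _ _ n0 p1 p2 (dn _ ha) (dn _ hb) h3.
  rewrite -eg => e3.
  by apply: (pf _ _ _ ha hb hc).
have -> : #|S_D n D| = \sum_(d <- D) totient (n %/ d).
  rewrite -sum1_card big_mkcond /=.
  have ci : forall i : 'I_n, (if i \in S_D n D then 1 else 0) = \sum_(d <- D) (if d == gcdn i n then 1 else 0).
    move=> i; rewrite inE; transitivity (count_mem (gcdn i n) D).
      by rewrite count_uniq_mem //; case: (_ \in _).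
    by rewrite -sum1_count big_mkcond.
  rewrite (eq_bigr _ (fun i _ => ci i)).
  rewrite exchange_big /=; apply: eq_big_seq => d dD.
  have [d0 _] := hD _ dD.
  rewrite -card_gcd // ?dn // -sum1_card big_mkcond /=.
  by rewrite [RHS]big_mkcond; apply: eq_bigr => i _; rewrite inE eq_sym.
rewrite natr_sum mulr_sumr; apply: eq_big_seq => d dD.
have [d0 hd] := hD _ dD.
have nd0 : 0 < n %/ d by rewrite divn_gt0 // dvdn_leq // dn.
have hr : radical n %| n %/ d.
  rewrite (dvdn_divRL _ (dn _ dD)) mulnC.
  by rewrite -[X in _ %| X](divnK (rad_dvd n)) dvdn_mul.
have et : totient n = totient (n %/ d) * d.
  rewrite -totient_mulk // ?divnK ?dn //.
  move=> p pp pd; apply: dvdn_trans hr; apply: p_dvd_rad.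
  by rewrite mem_primes pp n0 (dvdn_trans pd (dn _ dD)).
rewrite et natrM mulfK // pnatr_eq0 -lt0n //.
Qed.
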